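(* Fix $\alpha\in(0,1)$. Let $I=[a,b]\subset\mathbb{R}$ be a bounded closed interval and let $f^*\in C(I,\mathbb{R})$ be monotone. Then for every $\varepsilon>0$ there exist $L\in\mathbb{N}$ and a leaky-ReLU network $f_L\in\mathcal{N}_1(L)$ of width one such that $|f_L(x)-f^*(x)|\le\varepsilon$ for all $x\in I$.
   Context: Leaky-ReLU: $\sigma_\alpha(x)=\max(\alpha x,x)$. The class $\mathcal{N}_1(L)$ consists of all functions $f_L:\mathbb{R}\to\mathbb{R}$ given by $f_0(x)=w_0x+b_0$, $f_k(x)=w_k\sigma_\alpha(f_{k-1}(x))+b_k$, $k=1,\dots,L$, with arbitrary $w_k,b_k\in\mathbb{R}$. *)

(* Defs.v *)
From Stdlib Require Import Reals.
Open Scope R_scope.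

Definition leaky_relu (alpha x : R) : R := Rmax (alpha * x) x.

Fixpoint net (alpha : R) (w b : nat -> R) (k : nat) (x : R) : R :=
  match k with
  | O => w O * x + b O
  | S k' => w k * leaky_relu alpha (net alpha w b k' x) + b k
  end.

Definition in_N1 (alpha : R) (L : nat) (f : R -> R) : Prop :=
  exists w b : nat -> R, forall x, f x = net alpha w b L x.

Definition monotone_on (a b : R) (f : R -> R) : Prop :=
  (forall x y, a <= x -> x <= y -> y <= b -> f x <= f y) \/
  (forall x y, a <= x -> x <= y -> y <= b -> f y <= f x).

Definition continuous_on_I (a b : R) (f : R -> R) : Prop :=
  forall x, a <= x <= b -> forall eps, eps > 0 -> exists delta, delta > 0 /\
    forall y, a <= y <= b -> Rabs (y - x) < delta -> Rabs (f y - f x) < eps.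

(* Main.v *)
Require Import Defs.
From Stdlib Require Import Reals Lra Lia Arith.
Open Scope R_scope.

Definition SS (alpha : R) (g : R -> R) : Prop := exists L, in_N1 alpha L g.

Lemma net_ext alpha w b w' b' L x :
  (forall k, (k <= L)%nat -> w k = w' k /\ b k = b' k) ->
  net alpha w b L x = net alpha w' b' L x.
Proof.
  induction L as [|L IH]; intros H; simpl.
  - destruct (H 0%nat (le_n _)) as [-> ->]; reflexivity.
  - destruct (H (S L) (le_n _)) as [-> ->]. rewrite IH; [reflexivity|].
    intros k Hk; apply H; lia.
Qed.

Lemma SS_affine alpha g u v : SS alpha g -> SS alpha (fun x => u * g x + v).
Proof.
  intros [L [w [b Hg]]].
  exists L, (fun k => if Nat.eqb k L then u * w k else w k),
            (fun k => if Nat.eqb k L then u * b k + v else b k).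
  intros x; rewrite Hg. destruct L as [|L]; simpl.
  - ring.
  - rewrite Nat.eqb_refl.
    rewrite (net_ext alpha (fun k => if Nat.eqb k (S L) then u * w k else w k)
      (fun k => if Nat.eqb k (S L) then u * b k + v else b k) w b L x). { ring. }
    intros k Hk. assert (Nat.eqb k (S L) = false) as E by (apply Nat.eqb_neq; lia).
    rewrite E; auto.
Qed.

Lemma SS_layer alpha g p q : SS alpha g -> SS alpha (fun x => p * leaky_relu alpha (g x) + q).
Proof.
  intros [L [w [b Hg]]].
  exists (S L), (fun k => if Nat.eqb k (S L) then p else w k),
            (fun k => if Nat.eqb k (S L) then q else b k).
  intros x; rewrite Hg. simpl (net _ _ _ (S L) x). rewrite Nat.eqb_refl.
  rewrite (net_ext alpha (fun k => if Nat.eqb k (S L) then p else w k)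
            (fun k => if Nat.eqb k (S L) then q else b k) w b L x); [reflexivity|].
  intros k Hk. assert (Nat.eqb k (S L) = false) as E by (apply Nat.eqb_neq; lia).
  rewrite E; auto.
Qed.

Lemma SS_lin alpha u v : SS alpha (fun x => u * x + v).
Proof. exists 0%nat, (fun _ => u), (fun _ => v). intros x; reflexivity. Qed.

Definition U (c r y : R) : R := if Rle_dec y c then y else c + r * (y - c).

Lemma U_le c r y : y <= c -> U c r y = y.
Proof. intros; unfold U; destruct (Rle_dec y c); [auto|lra]. Qed.
Lemma U_ge c r y : c <= y -> U c r y = c + r * (y - c).
Proof. intros; unfold U; destruct (Rle_dec y c); [assert (y = c) by lra; subst; ring|auto]. Qed.
Lemma U_mono c r y1 y2 : 0 < r -> y1 <= y2 -> U c r y1 <= U c r y2.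
Proof.
  intros Hr H. unfold U; destruct (Rle_dec y1 c), (Rle_dec y2 c); try lra.
  - assert (0 <= r*(y2-c)) by (apply Rmult_le_pos; lra). lra.
  - assert (0 <= r*(y2-y1)) by (apply Rmult_le_pos; lra). lra.
Qed.
Lemma U_comp c r1 r2 y : 0 < r1 -> U c (r1 * r2) y = U c r2 (U c r1 y).
Proof.
  intros H1. destruct (Rle_dec y c).
  - rewrite !U_le; auto. rewrite U_le; auto.
  - assert (0 < r1*(y-c)) by (apply Rmult_lt_0_compat; lra).
    rewrite (U_ge c r1 y) by lra. rewrite (U_ge c r2) by lra.
    rewrite U_ge by lra. ring.
Qed.

Section Lr.
Variable alpha : R.
Hypothesis Ha : 0 < alpha < 1.
Lemma lr_pos z : 0 <= z -> leaky_relu alpha z = z.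
Proof. intros; unfold leaky_relu; apply Rmax_right; nra. Qed.
Lemma lr_neg z : z <= 0 -> leaky_relu alpha z = alpha * z.
Proof. intros; unfold leaky_relu; apply Rmax_left; nra. Qed.

Lemma SS_Ua g c : SS alpha g -> SS alpha (fun x => U c alpha (g x)).
Proof.
  intros H. assert (H2 := SS_layer alpha _ (-1) c (SS_affine alpha g (-1) c H)).
  destruct H2 as [L [w [b Hn]]]. exists L, w, b. intros x; rewrite <- Hn.
  destruct (Rle_dec (g x) c).
  - rewrite U_le by auto. rewrite lr_pos by lra. ring.
  - rewrite U_ge by lra. rewrite lr_neg by lra. ring.
Qed.

Lemma SS_Uia g c : SS alpha g -> SS alpha (fun x => U c (/alpha) (g x)).
Proof.
  intros H. assert (H2 := SS_layer alpha _ (/alpha) c (SS_affine alpha g 1 (-c) H)).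
  destruct H2 as [L [w [b Hn]]]. exists L, w, b. intros x; rewrite <- Hn.
  destruct (Rle_dec (g x) c).
  - rewrite U_le by auto. rewrite lr_neg by lra. field. lra.
  - rewrite U_ge by lra. rewrite lr_pos by lra. ring.
Qed.

Lemma SS_Upow g c N : SS alpha g -> SS alpha (fun x => U c (alpha ^ N) (g x)).
Proof.
  intros H; induction N as [|N IH]; simpl.
  - destruct H as [L [w [b Hn]]]. exists L, w, b. intros x; rewrite <- Hn.
    unfold U; destruct (Rle_dec (g x) c); ring.
  - destruct (SS_Ua _ c IH) as [L [w [b Hn]]]. exists L, w, b. intros x; rewrite <- Hn.
    rewrite Rmult_comm, U_comp; auto. apply pow_lt; lra.
Qed.

Lemma SS_Uipow g c N : SS alpha g -> SS alpha (fun x => U c ((/alpha) ^ N) (g x)).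
Proof.
  intros H; induction N as [|N IH]; simpl.
  - destruct H as [L [w [b Hn]]]. exists L, w, b. intros x; rewrite <- Hn.
    unfold U; destruct (Rle_dec (g x) c); ring.
  - destruct (SS_Uia _ c IH) as [L [w [b Hn]]]. exists L, w, b. intros x; rewrite <- Hn.
    rewrite Rmult_comm, U_comp; auto. apply pow_lt. apply Rinv_0_lt_compat; lra.
Qed.
End Lr.

Lemma staircase alpha (Ha : 0 < alpha < 1) (f : R -> R) (a h eps theta : R) (N n : nat)
  (Hh : 0 < h) (Hth : 0 < theta) (He : 0 < eps)
  (Hf : forall x y, a <= x -> x <= y -> y <= a + INR n * h -> f x <= f y)
  (Hstep : forall i, (i < n)%nat -> f (a + INR (S i) * h) - f (a + INR i * h) <= eps/2)
  (Hbud : theta * (INR n * h) <= eps/4)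
  (HTh : eps/2 <= theta * (/alpha)^N * h) :
  forall i, (i <= n)%nat -> exists g, SS alpha g /\
    (forall x, a + INR i * h <= x -> g x = g (a + INR i * h) + theta * (x - (a + INR i * h))) /\
    (forall x, x <= a + INR i * h -> g x <= g (a + INR i * h)) /\
    f (a + INR i * h) <= g (a + INR i * h) <= f (a + INR i * h) + eps/4 + INR i * theta * h /\
    (forall x, a <= x <= a + INR i * h -> Rabs (g x - f x) <= eps).
Proof.
  assert (Hr : 0 < (/alpha)^N) by (apply pow_lt; apply Rinv_0_lt_compat; lra).
  assert (Hq : 0 < alpha^N) by (apply pow_lt; lra).
  assert (Hrq : (/alpha)^N * alpha^N = 1).
  { rewrite pow_inv. field. apply pow_nonzero. lra. }
  set (r := (/alpha)^N) in *. set (q := alpha^N) in *.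
  set (Th := theta * r) in *.
  assert (HThp : 0 < Th) by (unfold Th; nra).
  induction i as [|i IH]; intros Hi.
  - exists (fun x => theta * (x - a) + f a). simpl INR. rewrite Rmult_0_l, Rplus_0_r.
    split; [|split; [|split; [|split]]].
    + destruct (SS_lin alpha theta (f a - theta * a)) as [L HL]. exists L.
      destruct HL as [w [b Hw]]. exists w, b. intros x; rewrite <- Hw. ring.
    + intros; ring.
    + intros x Hx. nra.
    + lra.
    + intros x Hx. replace x with a by lra. rewrite Rminus_diag, Rmult_0_r, Rplus_0_l, Rminus_diag, Rabs_R0. lra.
  - destruct (IH ltac:(lia)) as [g [Sg [Glin [Gmon [Gb Gerr]]]]].
    set (T := a + INR i * h) in *.
    assert (ET' : a + INR (S i) * h = T + h) by (unfold T; rewrite S_INR; ring).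
    rewrite ET'.
    set (p := g T) in *.
    set (d := Rmax (f (T + h)) p).
    set (s := T + (d - p) / Th).
    assert (HTa : a <= T) by (unfold T; assert (0 <= INR i) by apply pos_INR; nra).
    assert (HTb : T + h <= a + INR n * h).
    { rewrite <- ET'. apply Rplus_le_compat_l, Rmult_le_compat_r; [lra|]. apply le_INR; lia. }
    assert (HfT : f T <= f (T + h)) by (apply Hf; lra).
    assert (Hst := Hstep i ltac:(lia)). rewrite ET' in Hst. fold T in Hst.
    assert (Hdp : p <= d) by apply Rmax_r.
    assert (Hdf : f (T + h) <= d) by apply Rmax_l.
    assert (Hdp2 : d - p <= Th * h).
    { unfold d. apply Rmax_case_strong; intros; unfold Th, r in *; lra. }
    assert (HsT : T <= s).
    { unfold s. assert (0 <= (d - p) / Th) by (unfold Rdiv; apply Rmult_le_pos; [lra| left; apply Rinv_0_lt_compat; lra]). lra. }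
    assert (HsT' : s <= T + h).
    { unfold s. assert ((d - p) / Th <= h).
      { apply (Rmult_le_reg_r Th); [lra|]. unfold Rdiv. rewrite Rmult_assoc, Rinv_l by lra. lra. }
      lra. }
    set (g2 := fun x => U d q (U p r (g x))).
    assert (F1 : forall x, x <= T -> g2 x = g x).
    { intros x Hx. unfold g2. assert (g x <= p) by (apply Gmon; auto).
      rewrite (U_le p r) by auto. rewrite U_le by lra. reflexivity. }
    assert (F2 : forall x, T <= x -> U p r (g x) = p + Th * (x - T)).
    { intros x Hx. rewrite (Glin x Hx). fold p. rewrite U_ge by nra. unfold Th. ring. }
    assert (F3 : forall x, s <= x -> g2 x = d + theta * (x - s)).
    { intros x Hx. unfold g2. rewrite F2 by lra.
      assert (d <= p + Th * (x - T)).
      { assert (Th * (s - T) = d - p) by (unfold s; field; lra). nra. }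
      rewrite U_ge by auto.
      assert (Eth : theta = q * Th).
      { unfold Th. transitivity (theta * (r*q)). { rewrite Hrq; ring. } ring. }
      rewrite Eth.
      unfold s; field. lra. }
    assert (Hmon2 : forall x y, T <= x -> x <= y -> g2 x <= g2 y).
    { intros x y Hx Hxy. unfold g2. apply U_mono; [lra|]. rewrite !F2 by lra. nra. }
    assert (Hg2T : g2 T = p) by (rewrite F1 by lra; reflexivity).
    assert (Hp' : g2 (T + h) = d + theta * (T + h - s)) by (apply F3; lra).
    assert (HiN : INR (S i) <= INR n) by (apply le_INR; lia).
    rewrite S_INR in HiN |- *.
    assert (Hbud2 : (INR i + 1) * theta * h <= eps / 4).
    { assert ((INR i + 1) * theta * h <= theta * (INR n * h)).
      { replace ((INR i + 1) * theta * h) with (theta * ((INR i + 1) * h)) by ring.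
        apply Rmult_le_compat_l; [lra|]. apply Rmult_le_compat_r; lra. }
      lra. }
    assert (Hdup : d <= f (T + h) + eps/4 + INR i * theta * h).
    { unfold d. apply Rmax_lub; lra. }
    assert (Hthh : theta * (T + h - s) <= theta * h) by (apply Rmult_le_compat_l; lra).
    assert (Hthh0 : 0 <= theta * (T + h - s)) by (apply Rmult_le_pos; lra).
    exists g2. split; [|split; [|split; [|split]]].
    + unfold g2. apply SS_Upow; auto. apply SS_Uipow; auto.
    + intros x Hx. rewrite (F3 x) by lra. rewrite Hp'. ring.
    + intros x Hx. destruct (Rle_dec x T).
      * rewrite F1 by auto. assert (g x <= p) by (apply Gmon; auto). lra.
      * apply Hmon2; lra.
    + lra.
    + intros x Hx. destruct (Rle_dec x T).
      * rewrite F1 by auto. apply Gerr; lra.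
      * assert (p <= g2 x) by (rewrite <- Hg2T; apply Hmon2; lra).
        assert (g2 x <= g2 (T + h)) by (apply Hmon2; lra).
        assert (f T <= f x) by (apply Hf; lra).
        assert (f x <= f (T + h)) by (apply Hf; lra).
        apply Rabs_le; split; lra.
Qed.

Lemma unif_cont a b f : a <= b -> continuous_on_I a b f ->
  forall e, 0 < e -> exists del, 0 < del /\ forall x y, a <= x <= b -> a <= y <= b ->
    Rabs (x - y) < del -> Rabs (f x - f y) < e.
Proof.
  intros Hab Hc e He.
  set (cl := fun x => Rmin b (Rmax a x)).
  assert (Hcl : forall x, a <= x <= b -> cl x = x).
  { intros x Hx; unfold cl. rewrite Rmax_right by lra. apply Rmin_right; lra. }
  assert (Hcl2 : forall x, a <= cl x <= b).
  { intros x; unfold cl. split.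
    - apply Rmin_glb; [lra| apply Rmax_l].
    - apply Rmin_l. }
  assert (Hcl3 : forall x y, Rabs (cl x - cl y) <= Rabs (x - y)).
  { intros x y; unfold cl, Rmin, Rmax.
    repeat (destruct Rle_dec); unfold Rabs; repeat destruct Rcase_abs; lra. }
  set (F := fun x => f (cl x)).
  assert (HU : uniform_continuity F (fun c => a <= c <= b)).
  { apply Heine; [apply compact_P3|]. intros x Hx.
    unfold continuity_pt, continue_in, limit1_in, limit_in. intros eps Heps.
    destruct (Hc x Hx eps Heps) as [del [Hdel Hd]]. exists del; split; auto.
    intros y [_ Hy]. simpl in *. unfold R_dist in *. unfold F. rewrite (Hcl x Hx).
    apply Hd; auto. rewrite <- (Hcl x Hx). eapply Rle_lt_trans; [apply Hcl3|]. auto. }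
  destruct (HU (mkposreal e He)) as [[del Hdel] Hd]. exists del; split; auto.
  intros x y Hx Hy Hxy. assert (H := Hd x y Hx Hy Hxy). unfold F in H.
  rewrite (Hcl x Hx), (Hcl y Hy) in H. exact H.
Qed.

Lemma main_incr alpha (Ha : 0 < alpha < 1) a b f : a < b -> continuous_on_I a b f ->
  (forall x y, a <= x -> x <= y -> y <= b -> f x <= f y) ->
  forall eps, 0 < eps -> exists g, SS alpha g /\ forall x, a <= x <= b -> Rabs (g x - f x) <= eps.
Proof.
  intros Hab Hc Hm eps He.
  destruct (unif_cont a b f ltac:(lra) Hc (eps/2) ltac:(lra)) as [del [Hdel Hd]].
  destruct (archimed_cor1 (del / (b - a))) as [n [Hn Hn0]].
  { apply Rdiv_lt_0_compat; lra. }
  assert (HnR : 0 < INR n) by (apply lt_0_INR; auto).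
  set (h := (b - a) / INR n).
  assert (Hh : 0 < h) by (apply Rdiv_lt_0_compat; lra).
  assert (Hhd : h < del).
  { unfold h. unfold Rdiv. apply (Rmult_lt_reg_r (/ (b-a))).
    { apply Rinv_0_lt_compat; lra. }
    replace ((b - a) * / INR n * / (b - a)) with (/ INR n) by (field; lra). exact Hn. }
  assert (Hnh : a + INR n * h = b) by (unfold h; field; lra).
  set (theta := eps / (4 * (b - a))).
  assert (Hth : 0 < theta) by (apply Rdiv_lt_0_compat; lra).
  destruct (pow_lt_1_zero alpha ltac:(rewrite Rabs_right; lra) (2 * theta * h / eps))
    as [N HN].
  { apply Rdiv_lt_0_compat; [nra|lra]. }
  assert (HaN := HN N (le_n _)). rewrite Rabs_right in HaN by (left; apply pow_lt; lra).
  assert (HqN : 0 < alpha ^ N) by (apply pow_lt; lra).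
  assert (HTh : eps / 2 <= theta * (/alpha)^N * h).
  { rewrite pow_inv. apply (Rmult_le_reg_r (alpha ^ N)); auto.
    replace (theta * / alpha ^ N * h * alpha ^ N) with (theta * h) by (field; lra).
    apply (Rmult_lt_compat_l (eps/2)) in HaN; [|lra].
    replace (eps / 2 * (2 * theta * h / eps)) with (theta * h) in HaN by (field; lra).
    lra. }
  assert (Hf : forall x y, a <= x -> x <= y -> y <= a + INR n * h -> f x <= f y).
  { rewrite Hnh; auto. }
  assert (Hstep : forall i, (i < n)%nat -> f (a + INR (S i) * h) - f (a + INR i * h) <= eps/2).
  { intros i Hi. assert (Hi0 : 0 <= INR i) by apply pos_INR.
    assert (HiS : INR (S i) <= INR n) by (apply le_INR; lia).
    rewrite S_INR in *.
    assert (INR (S i) * h <= INR n * h) by (rewrite S_INR; apply Rmult_le_compat_r; lra).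
    rewrite S_INR in H.
    assert (Habs : Rabs (f (a + (INR i + 1) * h) - f (a + INR i * h)) < eps / 2).
    { apply Hd; try split; try nra.
      replace (a + (INR i + 1) * h - (a + INR i * h)) with h by ring.
      rewrite Rabs_right; lra. }
    apply Rabs_def2 in Habs. lra. }
  assert (Hbud : theta * (INR n * h) <= eps/4).
  { replace (INR n * h) with (b - a) by (rewrite <- Hnh; ring). unfold theta. right; field; lra. }
  destruct (staircase alpha Ha f a h eps theta N n Hh Hth He Hf Hstep Hbud HTh n (le_n _))
    as [g [Sg [_ [_ [_ Herr]]]]].
  exists g; split; auto. intros x Hx. apply Herr. lra.
Qed.

Theorem mainTheorem2 (alpha : R) (Halpha : 0 < alpha < 1) (a b : R) (Hab : a <= b)
  (fstar : R -> R) (Hcont : continuous_on_I a b fstar) (Hmono : monotone_on a b fstar) :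
  forall eps, eps > 0 ->
  exists (L : nat) (fL : R -> R), in_N1 alpha L fL /\
    forall x, a <= x <= b -> Rabs (fL x - fstar x) <= eps.
Proof.
  intros eps He.
  destruct Hab as [Hab|Hab].
  - destruct Hmono as [Hm|Hm].
    + destruct (main_incr alpha Halpha a b fstar Hab Hcont Hm eps He) as [g [[L HL] Hg]].
      exists L, g; split; auto.
    + assert (Hc' : continuous_on_I a b (fun x => - fstar x)).
      { intros x Hx e He'. destruct (Hcont x Hx e He') as [d [Hd H]]. exists d; split; auto.
        intros y Hy Hyx. replace (- fstar y - - fstar x) with (- (fstar y - fstar x)) by ring.
        rewrite Rabs_Ropp; auto. }
      assert (Hm' : forall x y, a <= x -> x <= y -> y <= b -> - fstar x <= - fstar y).
      { intros x y H1 H2 H3. assert (H := Hm x y H1 H2 H3). lra. }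
      destruct (main_incr alpha Halpha a b _ Hab Hc' Hm' eps He) as [g [Sg Hg]].
      destruct (SS_affine alpha g (-1) 0 Sg) as [L HL].
      exists L, (fun x => -1 * g x + 0); split; auto.
      intros x Hx. replace (-1 * g x + 0 - fstar x) with (- (g x - - fstar x)) by ring.
      rewrite Rabs_Ropp; auto.
  - subst b. exists 0%nat, (fun _ => fstar a). split.
    + exists (fun _ => 0), (fun _ => fstar a). intros x; simpl; ring.
    + intros x Hx. replace x with a by lra. rewrite Rminus_diag, Rabs_R0. lra.
Qed.
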